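(* Let $q$ be an odd prime power, $n$ a positive integer with $n\mid(q-1)$, $\lambda\in\mathbb{F}_q^{*}$ with multiplicative order dividing $\frac{q-1}{n}$, and let $\alpha_1,\dots,\alpha_n\in\mathbb{F}_q^{*}$ be the (pairwise distinct) roots of $x^n-\lambda$, i.e. $x^n-\lambda=\prod_{i=1}^n(x-\alpha_i)$, in some fixed order. Let $\ell\ge0$, $\boldsymbol\eta=(\eta_0,\dots,\eta_\ell)\in\mathbb{F}_q^{\ell+1}\setminus\{\boldsymbol0\}$, let $r$ be an integer with $0\le r\le\ell$, and let $k=\frac{n-\ell-r}{2}$ be an integer with $k\ge2$. Let $\boldsymbol v=(v_1,\dots,v_n)$ with $v_i\in\{-1,1\}$ for $k\le i\le n$ and $v_i\in\mathbb{F}_q\setminus\{-1,0,1\}$ for $1\le i\le k-1$. Suppose $$1+\sum_{t=r}^{\ell}\eta_t\,\Phi_{\ell+1+r-t}\neq0,\qquad\text{where }\Phi_i=(-1)^{n-1}P\,\Omega_i\ (1\le i\le\ell+1).$$ Then the $( * )$-$(\mathcal{L},\mathcal{P})$-TGRS code $\mathcal{C}$ is an LCD code, i.e. $\mathcal{C}\cap\mathcal{C}^{\perp}=\{\boldsymbol0\}$.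
   Context: $P=\prod_{i=1}^n\alpha_i$. For an integer $t$, $S_t(x_1,\dots,x_n)$ is the complete homogeneous symmetric polynomial of degree $t$ ($S_t=0$ for $t<0$, $S_0=1$, and $S_t=\sum_{t_1+\dots+t_n=t,\,t_i\ge0}x_1^{t_1}\cdots x_n^{t_n}$ for $t\ge0$), and $\Omega_i=\sum_{t=0}^{\ell}\eta_tS_{t+1-i}(\alpha_1,\dots,\alpha_n)$. The $( * )$-$(\mathcal{L},\mathcal{P})$-TGRS code is $\mathcal{C}=\{(v_1f(\alpha_1),\dots,v_nf(\alpha_n)) : f\in\mathcal{F}_{n,k,\boldsymbol\eta}\}$, where $\mathcal{F}_{n,k,\boldsymbol\eta}=\{\sum_{i=0}^{k-1}f_ix^i+f_0\sum_{j=0}^{\ell}\eta_jx^{k+j} : f_i\in\mathbb{F}_q\}$. $\mathcal{C}^{\perp}$ is the dual with respect to the standard inner product $\sum_i x_iy_i$. *)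

(* Defs.v *)
From HB Require Import structures.
From mathcomp Require Import all_boot all_order all_algebra.
Set Implicit Arguments. Unset Strict Implicit. Unset Printing Implicit Defensive.
Import GRing.Theory.
Local Open Scope ring_scope.

Section TGRS.
Variable F : fieldType.

Definition complete_hsym (n : nat) (x : 'I_n -> F) (t : int) : F :=
  match t with
  | Posz m => \sum_(e : {ffun 'I_n -> 'I_m.+1} | (\sum_i (e i : nat))%N == m)
                \prod_i x i ^+ e i
  | Negz _ => 0
  end.

Definition Pprod (n : nat) (alpha : 'I_n -> F) : F := \prod_i alpha i.

Definition Omega (n l : nat) (alpha : 'I_n -> F) (eta : 'I_l.+1 -> F) (i : nat) : F :=
  \sum_(t < l.+1) eta t * complete_hsym alpha ((t : nat)%:Z + 1 - i%:Z).

Definition Phi (n l : nat) (alpha : 'I_n -> F) (eta : 'I_l.+1 -> F) (i : nat) : F :=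
  (-1) ^+ (n.-1) * Pprod alpha * Omega alpha eta i.

Definition tgrs_poly (k l : nat) (eta : 'I_l.+1 -> F) (f : nat -> F) : {poly F} :=
  \sum_(i < k) f i *: 'X^i + f 0%N *: \sum_(j < l.+1) eta j *: 'X^(k + j).

Definition in_tgrs (n k l : nat) (alpha v : 'I_n -> F) (eta : 'I_l.+1 -> F)
  (c : 'rV[F]_n) : Prop :=
  exists f : nat -> F, c = \row_i (v i * (tgrs_poly k eta f).[alpha i]).

Definition in_dual (n : nat) (C : 'rV[F]_n -> Prop) (y : 'rV[F]_n) : Prop :=
  forall c, C c -> \sum_i c 0 i * y 0 i = 0.

Definition is_LCD (n : nat) (C : 'rV[F]_n -> Prop) : Prop :=
  forall c, C c -> in_dual C c -> c = 0.

End TGRS.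

(* Main.v *)
Require Import Defs.
From mathcomp Require Import all_boot all_order all_algebra all_field ring zify.
Import GRing.Theory.
Local Open Scope ring_scope.

Lemma natr_neq0_card (F : finFieldType) (n : nat) :
  (0 < n)%N -> (n %| #|F|.-1)%N -> n%:R != 0 :> F.
Proof.
move=> n0 ndiv; case: (finPcharP F) => p pp pc.
have hc := card_pprimeChar pc.
have pF : (p %| #|F|)%N.
  have : #|pPrimeCharType pc| = #|F| by [].
  move=> e; rewrite e in hc; rewrite hc.
  case el: (logn p #|F|) => [|m]; last by rewrite expnS dvdn_mulr.
  by have := finNzRing_gt1 F; rewrite hc el.
apply/negP; rewrite -(dvdn_pcharf pc) => pn.
have p1 : (p %| #|F|.-1)%N by apply: dvdn_trans ndiv.
have := finNzRing_gt1 F; case e: #|F| => [|c] // _.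
rewrite e /= in p1; rewrite e in pF.
have : (p %| 1)%N by rewrite -(dvdn_addr 1 p1) addn1.
by rewrite dvdn1 => /eqP p1'; rewrite p1' in pp.
Qed.

Section Roots.
Variables (F : fieldType) (n : nat) (lam : F) (alpha : 'I_n -> F).
Hypotheses (n_gt0 : (0 < n)%N) (lam0 : lam != 0) (ainj : injective alpha)
  (hP : 'X^n - lam%:P = \prod_(i < n) ('X - (alpha i)%:P)).

Lemma root_alpha x : x ^+ n = lam -> exists i, alpha i = x.
Proof.
move=> hx; have := congr1 (fun p => p.[x]) hP.
rewrite horner_prod !hornerE hx subrr => /esym/eqP/prodf_eq0 [i _].
by rewrite !hornerE subr_eq0 => /eqP ->; exists i.
Qed.

Lemma alpha_n i : alpha i ^+ n = lam.
Proof.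
have := congr1 (fun p => p.[alpha i]) hP.
rewrite horner_prod (bigD1 i) //= !hornerE subrr mul0r => /eqP.
by rewrite subr_eq0 => /eqP.
Qed.

Lemma alpha_neq0 i : alpha i != 0.
Proof.
apply/eqP => h; move: (alpha_n i); rewrite h expr0n.
by case: n n_gt0 => // m _ /= /eqP; rewrite eq_sym (negbTE lam0).
Qed.

Lemma key_perm s : (0 < s < n)%N -> exists gam (sig : 'I_n -> 'I_n),
  [/\ injective sig, (forall i, alpha (sig i) = gam * alpha i) & gam ^+ s != 1].
Proof.
case/andP=> s0 sn.
pose i0 := Ordinal n_gt0.
have [/existsP [i hi] | hno] := boolP [exists i, (alpha i / alpha i0) ^+ s != 1].
  pose gam := alpha i / alpha i0.
  have gn : gam ^+ n = 1.
    by rewrite /gam exprMn exprVn !alpha_n mulfV.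
  have ex j : exists k, alpha k = gam * alpha j.
    by apply: root_alpha; rewrite exprMn gn mul1r alpha_n.
  pose sig j := odflt j [pick k | alpha k == gam * alpha j].
  have sigP j : alpha (sig j) = gam * alpha j.
    rewrite /sig; case: pickP => [k /eqP //|/= h].
    by case: (ex j) => k hk; move: (h k); rewrite hk eqxx.
  have g0 : gam != 0 by rewrite /gam mulf_neq0 ?invr_eq0 ?alpha_neq0.
  exists gam, sig; split => //.
  by move=> a b hab; apply: ainj; apply: (mulfI g0); rewrite -!sigP hab.
exfalso.
have allr i : (alpha i) ^+ s = (alpha i0) ^+ s.
  move: hno; rewrite negb_exists => /forallP /(_ i); rewrite negbK exprMn exprVn.
  by move/eqP => h; rewrite -[LHS]mulr1 -(mulVf (expf_neq0 s (alpha_neq0 i0))) mulrA mulrC h mulr1 ?mul1r.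
pose p := 'X^s - ((alpha i0) ^+ s)%:P.
have p0 : p != 0 by rewrite -size_poly_eq0 /p size_XnsubC.
have hr : all (root p) [seq alpha i | i <- enum 'I_n].
  by apply/allP => x /mapP [i _ ->]; rewrite /root !hornerE allr subrr.
have hu : uniq [seq alpha i | i <- enum 'I_n] by rewrite map_inj_uniq ?enum_uniq.
have := max_poly_roots p0 hr hu.
by rewrite size_map size_enum_ord /p size_XnsubC // ltnS leqNgt sn.
Qed.

Lemma powersum s : (0 < s < n)%N -> \sum_i alpha i ^+ s = 0.
Proof.
move=> hs; have [gam [sig [si sP gs]]] := key_perm s hs.
have : \sum_i alpha i ^+ s = gam ^+ s * \sum_i alpha i ^+ s.
  rewrite {1}(reindex_inj si) /= mulr_sumr; apply: eq_bigr => i _.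
  by rewrite sP exprMn.
move=> h; have h2 : (gam ^+ s - 1) * \sum_i alpha i ^+ s = 0.
  by rewrite mulrBl mul1r -h subrr.
by move: h2 => /eqP; rewrite mulf_eq0 subr_eq0 (negbTE gs) => /eqP.
Qed.

End Roots.

Lemma hs_scale (F : fieldType) n (x y : 'I_n -> F) g m :
  (forall i, y i = g * x i) ->
  complete_hsym y (Posz m) = g ^+ m * complete_hsym x (Posz m).
Proof.
move=> hy; rewrite /complete_hsym mulr_sumr; apply: eq_bigr => e /eqP he.
rewrite -[X in g ^+ X]he -prodrXr -big_split /=; apply: eq_bigr => i _.
by rewrite hy exprMn.
Qed.

Lemma hs_perm (F : fieldType) n (x : 'I_n -> F) (sig : 'I_n -> 'I_n) m :
  injective sig ->
  complete_hsym (fun i => x (sig i)) (Posz m) = complete_hsym x (Posz m).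
Proof.
move=> si; have [tau st ts] := injF_bij si.
rewrite /complete_hsym.
have hinj : injective (fun e : {ffun 'I_n -> 'I_m.+1} => [ffun i => e (tau i)]).
  move=> e1 e2 /ffunP h; apply/ffunP => j.
  by have := h (sig j); rewrite !ffunE st.
rewrite [RHS](reindex_inj hinj) /=.
apply: eq_big => [e|e _].
  congr (_ == _); rewrite [RHS](reindex_inj si) /=.
  by apply: eq_bigr => i _; rewrite ffunE st.
rewrite [RHS](reindex_inj si) /=.
by apply: eq_bigr => i _; rewrite ffunE st.
Qed.

Lemma hs0 (F : fieldType) n (x : 'I_n -> F) : complete_hsym x (Posz 0) = 1.
Proof.
rewrite /complete_hsym (big_pred1 [ffun=> ord0]).
  by apply: big1 => i _; rewrite ffunE expr0.
move=> e /=; apply/idP/eqP => [he|->].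
  by apply/ffunP => i; rewrite ffunE; apply/val_inj; case: (e i) => -[].
by rewrite big1 // => i _; rewrite ffunE.
Qed.
Section Sums.
Variables (F : fieldType) (n : nat) (lam : F) (alpha : 'I_n -> F).
Hypotheses (n_gt0 : (0 < n)%N) (lam0 : lam != 0) (ainj : injective alpha)
  (hP : 'X^n - lam%:P = \prod_(i < n) ('X - (alpha i)%:P)).
Hypothesis alpha_n : forall i, alpha i ^+ n = lam.
Hypothesis powersum : forall s, (0 < s < n)%N -> \sum_i alpha i ^+ s = 0.

Lemma ps s : (s < n.*2)%N -> \sum_i alpha i ^+ s =
  if s == 0%N then n%:R else if s == n then n%:R * lam else 0.
Proof.
move=> s2; idtac.
case: eqP => [->|/eqP s0].
  rewrite /= (eq_bigr (fun=> 1)) => [|i _]; last by rewrite expr0.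
  by rewrite sumr_const card_ord.
case: eqP => [->|/eqP sn].
  rewrite /= (eq_bigr (fun=> lam)) => [|i _]; last by rewrite alpha_n.
  by rewrite sumr_const card_ord mulr_natl.
have [sl|sg] := ltnP s n; first by rewrite (powersum s) // lt0n s0.
have -> : s = (n + (s - n))%N by rewrite subnKC.
rewrite (eq_bigr (fun i => lam * alpha i ^+ (s - n))) => [|i _]; last by rewrite exprD alpha_n.
rewrite -mulr_sumr powersum ?mulr0 //.
rewrite subn_gt0 ltn_neqAle eq_sym sn sg /=.
by rewrite ltn_subLR // addnn.
Qed.

Lemma sum_horner (p : {poly F}) : (size p <= n.*2)%N ->
  \sum_i p.[alpha i] = n%:R * (p`_0 + lam * p`_n).
Proof.
move=> sp.
under eq_bigr do rewrite (horner_coef_wide _ sp).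
rewrite exchange_big /=.
under eq_bigr => s _ do rewrite -mulr_sumr (ps _ (ltn_ord s)).
have h0 : (0 < n.*2)%N by rewrite double_gt0.
have h1 : (n < n.*2)%N by rewrite -addnn -{1}[n]addn0 ltn_add2l.
rewrite (bigD1 (Ordinal h0)) //= (bigD1 (Ordinal h1)) /=; last first.
  by apply/negP => /eqP /(congr1 val) /= h; move: n_gt0; rewrite h.
rewrite [X in _ + (_ + X) = _]big1; last first.
  move=> s /andP [s1 s2].
have -> : (s == 0 :> nat) = false.
  by apply/negP => /eqP h; move: s1; apply/negP; rewrite negbK; apply/eqP/val_inj.
have -> : (s == n :> nat) = false.
  by apply/negP => /eqP h; move: s2; apply/negP; rewrite negbK; apply/eqP/val_inj.
  by rewrite mulr0.
have -> : (n == 0%N) = false by apply/negP => /eqP h; move: n_gt0; rewrite h.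
rewrite eqxx /= addr0; ring.
Qed.
End Sums.

Lemma hsym_int (F : fieldType) (n : nat) (lam : F) (alpha : 'I_n -> F) :
  (0 < n)%N -> lam != 0 -> injective alpha ->
  'X^n - lam%:P = \prod_(i < n) ('X - (alpha i)%:P) ->
  forall z : int, (z < n%:Z)%R -> complete_hsym alpha z = (z == 0)%:R.
Proof.
move=> n0 l0 ai hP [m|m] hz; last by [].
case: m hz => [|m] hz; first by rewrite hs0.
have hm : (0 < m.+1 < n)%N by rewrite /= -(ltz_nat) .
have [gam [sig [si sP gs]]] := @key_perm _ _ _ _ n0 l0 ai hP _ hm.
have e1 := @hs_perm _ _ alpha _ (m.+1) si.
have e2 := @hs_scale _ _ alpha _ _ (m.+1) sP.
rewrite e2 in e1.
have h2 : (gam ^+ m.+1 - 1) * complete_hsym alpha (Posz m.+1) = 0.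
  by rewrite mulrBl mul1r e1 subrr.
by move: h2 => /eqP; rewrite mulf_eq0 subr_eq0 (negbTE gs) => /eqP ->.
Qed.

Lemma size_sum_leq (F : fieldType) (I : finType) (P : pred I) (Fp : I -> {poly F}) N :
  (forall i, P i -> (size (Fp i) <= N)%N) -> (size (\sum_(i | P i) Fp i)%R <= N)%N.
Proof.
move=> h; apply: (big_ind (fun p : {poly F} => (size p <= N)%N)) => //.
  by rewrite size_poly0.
by move=> p q hp hq; rewrite (leq_trans (size_polyD _ _)) // geq_max hp hq.
Qed.

Lemma polyk (F : fieldType) (k : nat) (g : {poly F}) :
  (size g <= k)%N -> \sum_(i < k) g`_i *: 'X^i = g.
Proof.
move=> sg; rewrite -poly_def; apply/polyP => j; rewrite coef_poly.
case: ltnP => // h; rewrite nth_default //; exact: leq_trans sg h.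
Qed.

Theorem theorem4p2 (F : finFieldType) (n : nat) (lam : F)
    (alpha : 'I_n -> F) (l : nat) (eta : 'I_l.+1 -> F) (r k : nat)
    (v : 'I_n -> F) :
  odd #|F| ->
  (0 < n)%N ->
  (n %| #|F|.-1)%N ->
  lam != 0 ->
  lam ^+ (#|F|.-1 %/ n) = 1 ->
  injective alpha ->
  'X^n - lam%:P = \prod_(i < n) ('X - (alpha i)%:P) ->
  (exists j, eta j != 0) ->
  (r <= l)%N ->
  n = (k.*2 + l + r)%N ->
  (2 <= k)%N ->
  (forall i : 'I_n, (k.-1 <= i)%N -> v i = 1 \/ v i = -1) ->
  (forall i : 'I_n, (i < k.-1)%N -> v i \notin [:: -1; 0; 1]) ->
  1 + \sum_(t < l.+1 | (r <= t)%N) eta t * Phi alpha eta (l.+1 + r - t) != 0 ->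
  is_LCD (in_tgrs k alpha v eta).
Proof.
move=> _ n0 ndiv l0 _ ai hP _ rl hn k2 vpm vbad hcond c [fc ->] hdual.
have an := @alpha_n _ _ _ _ hP.
have anz := @alpha_neq0 _ _ _ _ n0 l0 hP.
have psum := @powersum _ _ _ _ n0 l0 ai hP.
have sumh := @sum_horner _ _ _ _ n0 an psum.
have nR := @natr_neq0_card _ _ n0 ndiv.
have k0 : (0 < k)%N by apply: leq_trans k2.
set G := \sum_(j < l.+1) eta j *: 'X^(k + j).
set H := \sum_(i < k) fc i *: 'X^i.
set f := tgrs_poly k eta fc.
have hf : f = H + fc 0%N *: G by [].
pose w i := v i ^+ 2 - 1.
have w0 (i : 'I_n) : (k.-1 <= i)%N -> w i = 0.
  by move=> h; rewrite /w; case: (vpm i h) => ->; rewrite ?sqrrN expr1n subrr.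
have wn0 (i : 'I_n) : (i < k.-1)%N -> w i != 0.
  move=> h; have := vbad i h; rewrite !inE /w => /norP [hm /norP [_ hp]].
  by rewrite subr_sqr_1 mulf_neq0 // ?subr_eq0 ?addr_eq0.
have sizeG : (size G <= k + l.+1)%N.
  apply: size_sum_leq => j _; rewrite (leq_trans (size_scale_leq _ _)) //.
  by rewrite size_polyXn ltn_add2l.
have G0 : G`_0 = 0.
  rewrite coef_sum big1 // => j _; rewrite coefZ coefXn.
  rewrite (_ : (0 == k + j)%N = false) ?mulr0 //; apply/negbTE.
  by rewrite eq_sym -lt0n (leq_trans k0 (leq_addr _ _)).
have sizeH : (size H <= k)%N.
  by apply: size_sum_leq => j _; rewrite (leq_trans (size_scale_leq _ _)) // size_polyXn.
have H0 : H`_0 = fc 0%N.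
  rewrite coef_sum (bigD1 (Ordinal k0)) //= coefZ coefXn eqxx mulr1 big1 ?addr0 //.
  move=> j hj; rewrite coefZ coefXn.
  have -> : (0 == j :> nat) = false.
    by apply/negP => /eqP h; move: hj; apply/negP; rewrite negbK; apply/eqP/val_inj.
  by rewrite mulr0.
have sizef : (size f <= k + l.+1)%N.
  rewrite hf (leq_trans (size_polyD _ _)) // geq_max (leq_trans sizeH (leq_addr _ _)).
  by rewrite (leq_trans (size_scale_leq _ _)).
have f0 : f`_0 = fc 0%N by rewrite hf coefD coefZ G0 mulr0 addr0 H0.
have dual_gen : forall g fc', g = tgrs_poly k eta fc' ->
    \sum_i (v i * g.[alpha i]) * (v i * f.[alpha i]) = 0.
  move=> g fc' hg.
  have hc : in_tgrs k alpha v eta (\row_i (v i * g.[alpha i])) by exists fc'; rewrite hg.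
  have := hdual _ hc; rewrite /= => h; rewrite -[RHS]h.
  by apply: eq_bigr => i _; rewrite !mxE.
have split_sum : forall g, \sum_i (v i * g.[alpha i]) * (v i * f.[alpha i]) =
    \sum_i (f * g).[alpha i] + \sum_i w i * f.[alpha i] * g.[alpha i].
  move=> g; rewrite -big_split /=; apply: eq_bigr => i _.
  rewrite hornerM /w; ring.
have dualg : forall g : {poly F}, (size g <= k)%N -> g`_0 = 0 ->
    \sum_i w i * f.[alpha i] * g.[alpha i] = 0.
  move=> g sg g0.
  have := dual_gen g (fun i => g`_i).
  rewrite split_sum sumh.
    rewrite coef0M g0 mulr0 add0r nth_default ?mulr0 ?mulr0 ?add0r //.
      by apply; rewrite /tgrs_poly /= g0 scale0r addr0 polyk.
    rewrite (leq_trans (size_polyMleq _ _)) // hn.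
    rewrite (leq_trans (n := (k + l.+1 + k).-1)) //; last by lia.
    by rewrite -!subn1 leq_sub2r // leq_add.
  rewrite (leq_trans (size_polyMleq _ _)) // hn.
  rewrite (leq_trans (n := (k + l.+1 + k).-1)) //; last by lia.
  by rewrite -!subn1 leq_sub2r // leq_add.
have le : (k.-1 <= n)%N by lia.
have step1 : forall i0 : 'I_n, (i0 < k.-1)%N -> f.[alpha i0] = 0.
  move=> i0 hi0.
  pose b (j : 'I_(k.-1)) := alpha (widen_ord le j).
  pose j0 : 'I_(k.-1) := Ordinal hi0.
  pose g := 'X * \prod_(j | j != j0) ('X - (b j)%:P).
  have sg : (size g <= k)%N.
    rewrite (leq_trans (size_polyMleq _ _)) // size_polyX size_prod => [|j _]; last first.
      by rewrite polyXsubC_eq0.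
    under eq_bigr do rewrite size_XsubC.
    rewrite sum_nat_const cardC1 card_ord. lia.
  have g0 : g`_0 = 0 by rewrite coefXM.
  have := dualg g sg g0.
  rewrite (bigD1 i0) //= big1 ?addr0; last first.
    move=> i hi; case: (ltnP i k.-1) => hik; last by rewrite w0 // !mul0r.
    rewrite /g hornerM.
    have -> : (\prod_(j | j != j0) ('X - (b j)%:P)).[alpha i] = 0.
      rewrite horner_prod; apply/eqP/prodf_eq0; exists (Ordinal hik).
        apply/eqP => /(congr1 val) /= h.
        by move: hi; rewrite -(inj_eq val_inj) /= h eqxx.
      rewrite !hornerE /b (_ : widen_ord le (Ordinal hik) = i) ?subrr //.
      exact: val_inj.
    by rewrite !mulr0.
  move/eqP; rewrite !mulf_eq0 (negbTE (wn0 _ hi0)) /= => /orP [/eqP //|].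
  rewrite /g hornerM mulf_eq0 hornerX (negbTE (anz _)) /= horner_prod.
  move/prodf_eq0 => [j hj]; rewrite !hornerE subr_eq0 => /eqP /ai h.
  by move: hj; rewrite -(inj_eq val_inj) /= h eqxx.
pose D := \sum_(t < l.+1) \sum_(s < l.+1) eta t * eta s * ((s + t)%N == (l + r)%N)%:R.
have hGG : (G * G)`_n = D.
  rewrite /G mulr_suml coef_sum; apply: eq_bigr => t _.
  rewrite mulr_sumr coef_sum; apply: eq_bigr => s _.
  rewrite -scalerAl -scalerAr -exprD !coefZ coefXn mulrA.
  have -> : (n == (k + t + (k + s))%N) = ((s + t)%N == (l + r)%N).
    by apply/idP/idP => /eqP h; apply/eqP; lia.
  by [].
have hsgn : (-1) ^+ n.-1 * Pprod alpha = lam.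
  have := congr1 (fun p => p.[0]) hP; rewrite /= horner_prod !hornerE expr0n.
  rewrite (negbTE (lt0n_neq0 n0)) /= sub0r.
  rewrite (eq_bigr (fun i => (-1) * alpha i)) => [|i _]; last by rewrite !hornerE mulN1r ?sub0r.
  rewrite big_split /= prodr_const card_ord /Pprod => h.
  have e : (-1) ^+ n = (-1) ^+ n.-1 * (-1) :> F by rewrite -exprSr prednK.
  rewrite -[lam]opprK h e; ring.
have hcond' : 1 + lam * D != 0.
  suff <- : \sum_(t < l.+1 | (r <= t)%N) eta t * Phi alpha eta (l.+1 + r - t) = lam * D by [].
  rewrite /D mulr_sumr big_mkcond /=; apply: eq_bigr => t _.
  case: ifP => rt.
    rewrite /Phi hsgn /Omega mulr_sumr mulr_sumr mulr_sumr; apply: eq_bigr => s _.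
    rewrite (@hsym_int _ _ _ _ n0 l0 ai hP); last by have := ltn_ord s; have := ltn_ord t; lia.
    have -> : ((s%:Z + 1 - (l.+1 + r - t)%N%:Z) == 0) = ((s + t)%N == (l + r)%N).
      by apply/eqP/eqP => h; have := ltn_ord t; lia.
    ring.
  rewrite mulr_sumr big1 ?mulr0 // => s _.
  have -> : ((s + t)%N == (l + r)%N) = false.
    by apply/negbTE/eqP => h; have := ltn_ord s; move/negbT: rt; lia.
  by rewrite mulr0 mulr0.
have sf : \sum_i w i * f.[alpha i] * (1 + G).[alpha i] = 0.
  apply: big1 => i _; case: (ltnP i k.-1) => hik.
    by rewrite step1 // mulr0 mul0r.
  by rewrite w0 // !mul0r.
have h1G : 1 + G = tgrs_poly k eta (fun i => (i == 0%N)%:R).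
  rewrite /tgrs_poly /= scale1r; congr (_ + _).
  rewrite -[LHS](@polyk _ k 1) ?size_poly1 //.
  by apply: eq_bigr => i _; rewrite coef1.
have := dual_gen _ _ h1G.
rewrite split_sum sf addr0 sumh; last first.
  rewrite (leq_trans (size_polyMleq _ _)) //.
  rewrite (leq_trans (n := (k + l.+1 + (k + l.+1)).-1)) //; last by lia.
  rewrite -!subn1 leq_sub2r // leq_add //.
  by rewrite (leq_trans (size_polyD _ _)) // geq_max size_poly1 sizeG; lia.
move/eqP; rewrite mulf_eq0 (negbTE nR) /= coef0M f0 coefD coef1 G0 addr0 mulr1.
rewrite mulrDr mulr1 coefD nth_default; last by rewrite (leq_trans sizef) //; lia.
rewrite add0r {2}hf mulrDl coefD -scalerAl coefZ hGG.
rewrite (@nth_default _ _ (H * G)); last first.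
  rewrite (leq_trans (size_polyMleq _ _)) //.
  rewrite (leq_trans (n := (k + (k + l.+1)).-1)) //; last by lia.
  by rewrite -!subn1 leq_sub2r // leq_add.
rewrite add0r => hfc.
have fc00 : fc 0%N = 0.
  move: hfc; rewrite -{1}[fc 0%N]mulr1 mulrCA -mulrDr mulf_eq0 (negbTE hcond') orbF.
  by move/eqP.
have hH : f = H by rewrite hf fc00 scale0r addr0.
have fz : f = 0.
  apply/eqP; apply: contraT => fn0.
  pose rs := 0 :: [seq alpha (widen_ord le j) | j <- enum 'I_(k.-1)].
  have hr : all (root f) rs.
    rewrite /= /root horner_coef0 f0 fc00 eqxx /=.
    apply/allP => x /mapP [j _ ->]; rewrite step1 //; exact: ltn_ord j.
  have hu : uniq rs.
    rewrite /= map_inj_uniq ?enum_uniq ?andbT.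
      by apply/mapP => [[j _ /esym h]]; move: (anz (widen_ord le j)); rewrite h eqxx.
    by move=> a b /ai /(congr1 val) /= h; apply: val_inj.
  have := max_poly_roots fn0 hr hu.
  rewrite /= size_map size_enum_ord hH ltnNge.
  by rewrite (leq_trans sizeH) //; lia.
by apply/rowP => i; rewrite !mxE -hf fz horner0 mulr0.
Qed.
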